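(* For every oriented path $P$, $\mathrm{mad}_{\delta^+}(P)=|V(P)|-1$.
   Context: An oriented path is an orientation of an undirected path. A subdivision of a digraph $F$ is a digraph obtained from $F$ by replacing each arc $(x,y)$ by a directed path from $x$ to $y$ (internally disjoint, new internal vertices). For a digraph $F$, $\mathrm{mad}_{\delta^+}(F)$ is the least integer $c$ such that every digraph $D$ with minimum out-degree $\delta^+(D)\ge c$ contains a subdivision of $F$ as a subdigraph. *)

(* Defs.v *)
(* Finite digraphs are given by a finType V and an arc
   relation e : rel V (simple digraphs: no loops; opposite arcs allowed). *)
From mathcomp Require Import all_boot.
Set Implicit Arguments. Unset Strict Implicit. Unset Printing Implicit Defensive.

Definition loopless (V : finType) (e : rel V) : Prop := irreflexive e.

Definition min_outdeg_ge (V : finType) (e : rel V) (c : nat) : Prop :=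
  forall v : V, c <= #|[set w | e v w]|.

(* (V, e) contains a subdivision of the digraph (U, fe) as a subdigraph:
   an injective map f of the vertices of F, and for every arc (x,y) of F
   a directed path in D from f x to f y whose list of internal vertices is
   p x y; internal vertices are new (not images of vertices of F), the
   paths are vertex-simple, and paths of distinct arcs are internally
   disjoint. *)
Definition contains_subdivision (U : finType) (fe : rel U)
    (V : finType) (e : rel V) : Prop :=
  exists (f : U -> V) (p : U -> U -> seq V),
    injective f /\
    (forall x y, fe x y ->
        path e (f x) (rcons (p x y) (f y)) /\ uniq (p x y) /\
        (forall v, v \in p x y -> forall z, v != f z)) /\
    (forall x y x' y', fe x y -> fe x' y' -> (x, y) != (x', y') ->
        forall v, v \in p x y -> v \notin p x' y').

(* The oriented path with vertices 0, ..., size s, where s`_i = true means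
   the arc between i and i+1 is (i, i+1), and false means it is (i+1, i).
   Every oriented path is isomorphic to one of these. *)
Definition opath_arc (s : seq bool) : rel 'I_(size s).+1 :=
  fun i j => ((j == i.+1 :> nat) && nth false s i)
          || ((i == j.+1 :> nat) && ~~ nth false s j).

Definition forces_subdivision (U : finType) (fe : rel U) (c : nat) : Prop :=
  forall (V : finType) (e : rel V), 0 < #|V| -> loopless e ->
    min_outdeg_ge e c -> contains_subdivision fe e.

Definition is_mad_dplus (U : finType) (fe : rel U) (c : nat) : Prop :=
  forces_subdivision fe c /\
  (forall c', forces_subdivision fe c' -> c <= c').

(* Main.v *)
Require Import Defs.
From mathcomp Require Import all_boot.
From mathcomp Require Import zify.
Set Implicit Arguments. Unset Strict Implicit. Unset Printing Implicit Defensive.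

Section Embed.
Variables (V : finType) (e : rel V).

Definition econv : rel V := fun x y => e y x.

Fixpoint okp (a : V) (s : seq bool) (t : seq (seq V)) : bool :=
  match s, t with
  | [::], [::] => true
  | d :: s', l :: t' =>
      (l != [::]) && path (if d then e else econv) a l && okp (last a l) s' t'
  | _, _ => false
  end.

Fixpoint brs (a : V) (t : seq (seq V)) : seq V :=
  if t is l :: t' then a :: brs (last a l) t' else [:: a].

Definition inner (l : seq V) : seq V :=
  if l is x :: l' then belast x l' else [::].

Lemma okp_size a s t : okp a s t -> size t = size s.
Proof.
elim: s a t => [|d s IH] a [|l t] //= /andP[_ /IH ->] //.
Qed.

Lemma size_brs a t : size (brs a t) = (size t).+1.
Proof. by elim: t a => [|l t IH] a //=; rewrite IH. Qed.

Lemma okp_nth x0 n a s t : okp a s t -> n < size t ->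
  [/\ nth [::] t n != [::],
      nth x0 (brs a t) n.+1 = last (nth x0 (brs a t) n) (nth [::] t n) &
      path (if nth false s n then e else econv) (nth x0 (brs a t) n) (nth [::] t n)].
Proof.
elim: n a s t => [|n IH] a [|d s] [|l t] //= /andP[/andP[ln0 pl] ok] ltn.
- by split=> //; case: t {ok ltn}.
- exact: IH.
Qed.

Lemma okp_nonempty a s t l : okp a s t -> l \in t -> l != [::].
Proof.
elim: s a t => [|d s IH] a [|l' t] //= /andP[/andP[ln0 pl] ok].
by rewrite inE => /orP[/eqP -> // | /(IH _ _ ok)].
Qed.

Lemma last_in (a : V) l : l != [::] -> last a l \in l.
Proof. by case: l => // x l _; rewrite /= mem_last. Qed.

Lemma nth_brs_in x0 a t n : n < size t -> (forall l, l \in t -> l != [::]) ->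
  nth x0 (brs a t) n.+1 = last (nth x0 (brs a t) n) (nth [::] t n) /\
  nth x0 (brs a t) n.+1 \in nth [::] t n.
Proof.
elim: t a n => [|l t IH] a n //= lt tn.
case: n lt => [|n] lt /=.
  split; first by case: t {IH lt tn}.
  have l0 : l != [::] by apply: tn; rewrite mem_head.
  have -> : nth x0 (brs (last a l) t) 0 = last a l by case: t {IH lt tn}.
  exact: last_in.
apply: IH => // l' l't; apply: tn; by rewrite inE l't orbT.
Qed.


Lemma mem_nth_flatten (t : seq (seq V)) k x : x \in nth [::] t k -> x \in flatten t.
Proof.
elim: t k => [|l t IH] [|k] //=.
- by move=> xl; rewrite mem_cat xl.
- by move=> /IH xt; rewrite mem_cat xt orbT.
Qed.

Lemma nth_flatten_uniq (t : seq (seq V)) k : uniq (flatten t) -> uniq (nth [::] t k).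
Proof.
elim: t k => [|l t IH] [|k] //=; rewrite cat_uniq => /and3P[ul _ ut] //.
exact: IH.
Qed.

Lemma nth_flatten_disj (t : seq (seq V)) n m x : uniq (flatten t) -> n != m ->
  x \in nth [::] t n -> x \notin nth [::] t m.
Proof.
elim: t n m => [|l t IH] [|n] [|m] //=; rewrite cat_uniq => /and3P[ul hl ut] nm.
- move=> xl; apply/negP => /mem_nth_flatten xt.
  by move/hasPn: hl => /(_ x xt); rewrite xl.
- move=> /mem_nth_flatten xt; apply/negP => xl.
  by move/hasPn: hl => /(_ x xt); rewrite xl.
- by apply: IH.
Qed.

Lemma inner_rcons (a : V) l : l != [::] -> rcons (inner l) (last a l) = l.
Proof. by case: l => // x l _ /=; rewrite -lastI. Qed.

Lemma brs0 x0 a t : nth x0 (brs a t) 0 = a.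
Proof. by case: t. Qed.

Definition pn (t : seq (seq V)) (x y : nat) : seq V :=
  if y == x.+1 then inner (nth [::] t x)
  else if x == y.+1 then rev (inner (nth [::] t y)) else [::].


Lemma mem_inner (l : seq V) v : v \in inner l -> v \in l.
Proof. by case: l => //= x l /mem_belast. Qed.

Lemma inner_uniq (a : V) (l : seq V) : uniq l -> uniq (inner l) /\ last a l \notin inner l.
Proof.
case: l => // x l u; have: uniq (rcons (belast x l) (last x l)) by rewrite -lastI.
by rewrite rcons_uniq => /andP[h1 h2]; split.
Qed.

Lemma inner_brs a s t n v z : okp a s t -> uniq (a :: flatten t) -> n < size t ->
  v \in inner (nth [::] t n) -> z <= size t -> v != nth a (brs a t) z.
Proof.
move=> ok /= /andP[aN u] lt vi lz.
have vQ := mem_inner vi.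
case: z lz => [|z] lz.
  rewrite brs0; apply/eqP => va; move: aN; rewrite -va.
  by rewrite (mem_nth_flatten vQ).
have [eqz inz] := nth_brs_in a a lz (fun l => okp_nonempty ok).
have [eq | neq] := eqVneq z n.
  subst z; rewrite eqz.
  have [_ h] := inner_uniq (nth a (brs a t) n) (nth_flatten_uniq n u).
  by apply/eqP => ve; move: h; rewrite -ve vi.
apply/eqP => ve; move: inz; rewrite -ve => vz.
by move: (nth_flatten_disj u neq vz); rewrite vQ.
Qed.


Lemma okp_sub a s t : okp a s t -> uniq (a :: flatten t) ->
  contains_subdivision (@opath_arc s) e.
Proof.
move=> ok u.
have szt := okp_size ok.
have ne := okp_nonempty ok.
have uf : uniq (flatten t) by case/andP: u.
exists (fun i : 'I_(size s).+1 => nth a (brs a t) i).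
exists (fun x y : 'I_(size s).+1 => pn t x y).
split; [|split].
- move=> i j /= eqij; apply/val_inj => /=.
  have bi : forall k : 'I_(size s).+1, k != 0 :> nat ->
      nth a (brs a t) k \in nth [::] t k.-1.
    move=> [[|k] hk] //= _; apply: (nth_brs_in a a _ ne).2; by rewrite szt.
  case: i j eqij => [[|i] hi] [[|j] hj] //= eqij.
  + have := bi (Ordinal hj) isT; rewrite /= -eqij brs0 => aQ.
    by case/andP: u => /negP[]; apply: mem_nth_flatten aQ.
  + have := bi (Ordinal hi) isT; rewrite /= eqij brs0 => aQ.
    by case/andP: u => /negP[]; apply: mem_nth_flatten aQ.
  + apply/eqP; rewrite eqSS; apply/negP => /negP neq.
    have := bi (Ordinal hi) isT; rewrite /= eqij => xi.
    have := bi (Ordinal hj) isT => /= xj.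
    by move: (nth_flatten_disj uf neq xi); rewrite xj.
- move=> x y; rewrite /opath_arc => /orP[/andP[/eqP yx sx] | /andP[/eqP xy sy]].
  + have xlt : x < size t by rewrite szt -ltnS -yx.
    have [h1 h2 h3] := okp_nth a ok xlt.
    rewrite /pn yx eqxx sx in h3 *.
    rewrite h2 (inner_rcons _ h1); split=> //.
    have [ui _] := inner_uniq a (nth_flatten_uniq x uf).
    split=> // v vi z; apply: inner_brs ok u xlt vi _.
    by rewrite szt -ltnS.
  + have ylt : y < size t by rewrite szt -ltnS -xy.
    have [h1 h2 h3] := okp_nth a ok ylt.
    have yx : (y == x.+1 :> nat) = false by rewrite xy; apply/negbTE; rewrite neq_ltn ltnS leqnSn.
    rewrite /pn yx xy eqxx (negPf sy) in h3 *.
    have [ui _] := inner_uniq a (nth_flatten_uniq y uf).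
    split; last split.
    * rewrite h2; move: h3.
      move: (nth a (brs a t) y) (nth [::] t y) h1 => b Q h1.
      rewrite -{1}(inner_rcons b h1) => h3.
      have := rev_path e b (rcons (inner Q) (last b Q)).
      by rewrite last_rcons belast_rcons rev_cons => ->.
    * by rewrite rev_uniq.
    * move=> v; rewrite mem_rev => vi z; apply: inner_brs ok u ylt vi _.
      by rewrite szt -ltnS.
- have key : forall x y : 'I_(size s).+1, opath_arc x y -> exists n,
      {subset pn t x y <= nth [::] t n} /\
      ((x : nat), (y : nat)) = (if nth false s n then (n, n.+1) else (n.+1, n)).
    move=> x y; rewrite /opath_arc => /orP[/andP[/eqP yx sx] | /andP[/eqP xy sy]].
    + exists x; rewrite /pn yx eqxx sx; split=> // v; exact: mem_inner.
    + have yx : (y == x.+1 :> nat) = false.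
        by rewrite xy; apply/negbTE; rewrite neq_ltn ltnS leqnSn.
      exists y; rewrite /pn yx xy eqxx (negPf sy); split=> // v.
      by rewrite mem_rev; exact: mem_inner.
  move=> x y x' y' /key[n [sn en]] /key[n' [sn' en']] neq v vp.
  have [eqn | nn] := eqVneq n n'.
    subst n'; rewrite -en' in en; move: en => [ex ey].
    have ox : x = x' by apply: val_inj.
    have oy : y = y' by apply: val_inj.
    by rewrite ox oy eqxx in neq.
  apply/negP => /sn' vn'.
  by move: (nth_flatten_disj uf nn (sn _ vp)); rewrite vn'.
Qed.


Definition eA (A : {set V}) : rel V := fun x y => [&& x \in A, y \in A & e x y].
Definition outdeg (A : {set V}) y := #|[set z in A | e y z]|.

Lemma outdegD A B y : outdeg A y <= outdeg (A :\: B) y + #|B|.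
Proof.
rewrite /outdeg; apply: leq_trans (leq_card_setU _ _).
apply: subset_leq_card; apply/subsetP => z; rewrite !inE.
by case: (z \in B); rewrite /= ?orbT //= => ->.
Qed.

Lemma path_eA (A : {set V}) x p : path (eA A) x p -> path e x p /\ {subset p <= A}.
Proof.
elim: p x => [|y p IH] x //= /andP[/and3P[_ yA exy] /IH [pp sp]]; split.
  by rewrite exy.
by move=> z; rewrite inE => /orP[/eqP -> // | /sp].
Qed.

Lemma path_to_eA (A : {set V}) x p : x \in A -> path e x p -> {subset p <= A} -> path (eA A) x p.
Proof.
elim: p x => [|y p IH] x //= xA /andP[exy pp] sp.
have yA : y \in A by apply: sp; rewrite mem_head.
rewrite /eA xA yA exy /=; apply: IH => // z zp; apply: sp; by rewrite inE zp orbT.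
Qed.

Lemma eA_mem (A : {set V}) w q : w \in A -> path (eA A) w q -> {subset w :: q <= A}.
Proof.
move=> wA /path_eA [_ sq] z; rewrite inE => /orP[/eqP -> // | /sq //].
Qed.

Lemma ar1 (P : Prop) a m : a - m <= 0 -> m.+2 <= a -> P.
Proof. move=> h1 h2; exfalso; lia. Qed.
Lemma ar2 a m n : a - m <= n.+1 -> m.+2 <= a -> a - m.+1 <= n.
Proof. lia. Qed.

Lemma maxpath (A : {set V}) w : w \in A -> exists q, [/\ path (eA A) w q, uniq (w :: q) &
  forall y, y \in A -> e (last w q) y -> y \in w :: q].
Proof.
move=> wA.
suff H : forall n q, #|A| - size q <= n -> path (eA A) w q -> uniq (w :: q) ->
  exists q', [/\ path (eA A) w q', uniq (w :: q') &
  forall y, y \in A -> e (last w q') y -> y \in w :: q'].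
  by apply: (H #|A| [::]); rewrite ?subn0.
elim=> [|n IH] q hn pq uq;
  (have [y /and3P[yA ey yq] | none] :=
     pickP (fun y => [&& y \in A, e (last w q) y & y \notin w :: q]);
   last by exists q; split=> // y yA ey; apply/negPn/negP => yq;
     move: (none y); rewrite yA ey yq).
all: have uq' : uniq (w :: rcons q y) by rewrite -rcons_cons rcons_uniq yq uq.
all: have sz : size (w :: rcons q y) <= #|A|
  by rewrite -(card_uniqP uq'); apply: subset_leq_card; apply/subsetP => z;
     rewrite -rcons_cons mem_rcons inE => /orP[/eqP -> // | /(eA_mem wA pq) //].
- by move: hn sz; rewrite /= size_rcons; apply: ar1.
- apply: (IH (rcons q y)) => //.
  + by move: hn sz; rewrite /= size_rcons; apply: ar2.
  + rewrite rcons_path pq /eA yA ey /= andbT.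
    by apply: (eA_mem wA pq); apply: mem_last.
Qed.

Lemma sorted_drop n (s : seq V) : sorted e s -> sorted e (drop n s).
Proof.
elim: s n => [|x s IH] [|n] //= ps; apply: IH; exact: path_sorted ps.
Qed.

Lemma last_drop x0 n (s : seq V) : n < size s -> last x0 (drop n s) = last x0 s.
Proof.
move=> lt; rewrite -{2}(cat_take_drop n s) last_cat (drop_nth x0 lt) //.
Qed.

Lemma last_in_C (C : pred V) x p : x \in C -> path e x p ->
  exists y pre post, [/\ y \in C, path e y post, last y post = last x p,
     all (fun z => z \notin C) post & p = pre ++ post].
Proof.
elim/last_ind: p => [|p a IH] xC.
  by move=> _; exists x, [::], [::].
rewrite rcons_path => /andP[pp ea].
case aC: (a \in C).
  by exists a, (rcons p a), [::]; rewrite cats0 last_rcons.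
have [y [pre [post [yC py ly ap ep]]]] := IH xC pp.
exists y, pre, (rcons post a); split=> //.
- by rewrite rcons_path py ly ea.
- by rewrite !last_rcons.
- by rewrite all_rcons aC.
- by rewrite ep rcons_cat.
Qed.

Lemma inpath (A : {set V}) w b : irreflexive e -> w \in A ->
  (forall y, y \in A -> y != w -> b <= outdeg A y) -> 0 < outdeg A w ->
  (forall y, y \in A -> connect (eA A) w y -> connect (eA A) y w) ->
  exists cs, [/\ size cs = b, path econv w cs, uniq (w :: cs) & {subset cs <= A}].
Proof.
move=> irr wA deg degw conn.
case: b deg => [|b] deg; first by exists [::].
have [q [pq uq mq]] := maxpath wA.
have QA := eA_mem wA pq.
set z := last w q.
have zQ : z \in w :: q by apply: mem_last.
have zA : z \in A by apply: QA.
have q0 : q != [::].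
  apply/negP => /eqP q0; move: degw; rewrite /outdeg card_gt0.
  case/set0Pn => y; rewrite inE => /andP[yA ey].
  move: (mq y yA); rewrite q0 inE /= => /(_ ey) /eqP yw.
  by move: ey; rewrite yw irr.
have zw : z != w.
  apply/eqP => zw; move: uq; rewrite /= -zw /z last_in //.
have degz := deg z zA zw.
set Q := w :: q.
set j := find (e z) Q.
have hasQ : has (e z) Q.
  have : 0 < outdeg A z by apply: leq_trans degz.
  rewrite /outdeg card_gt0 => /set0Pn [y]; rewrite inE => /andP[yA ey].
  by apply/hasP; exists y => //; apply: mq.
have jlt : j < size Q by rewrite /j -has_find.
set C := drop j Q.
have [pqe _] := path_eA pq.
have sC : sorted e C by apply: sorted_drop; exact: pqe.
have uC : uniq C by apply: drop_uniq.
have CA : {subset C <= A} by move=> x /mem_drop /QA.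
have lC : last w C = z by rewrite last_drop.
have nC : forall y, y \in A -> e z y -> y \in C.
  move=> y yA ey; have := mq y yA ey; rewrite -/Q -(cat_take_drop j Q) mem_cat.
  case/orP=> // yt; exfalso.
  have : has (e z) (take j Q) by apply/hasP; exists y.
  by rewrite has_take // ltnn.
have C0 : C != [::] by rewrite -size_eq0 size_drop subn_eq0 -ltnNge jlt.
have zC : z \in C by rewrite -lC last_in.
have szC : b.+2 <= size C.
  have h : #|[set y in A | e z y]| <= #|[set y in C] :\ z|.
    apply: subset_leq_card; apply/subsetP => y; rewrite !inE => /andP[yA ey].
    rewrite (nC y yA ey) andbT; apply/eqP => yz; by move: ey; rewrite yz irr.
  have h2 := cardsD1 z [set y in C].
  rewrite cardsE (card_uniqP uC) inE zC in h2.
  by rewrite h2 add1n ltnS (leq_trans degz h).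
have cyC : cycle e C.
  have sC' := sC; rewrite /C (drop_nth w jlt) /= in sC' *.
  rewrite rcons_path sC' /=.
  have -> : last (nth w Q j) (drop j.+1 Q) = z.
    by rewrite -lC /C (drop_nth w jlt).
  exact: nth_find.
have [pp [ppA ppl ppu]] : exists pp, [/\ path (eA A) z pp, last z pp = w & uniq (z :: pp)].
  have /connectP [pp0 pA0 ->] : connect (eA A) z w.
    by apply: conn => //; apply/connectP; exists q.
  by case: (shortenP pA0) => pp ? ? _; exists pp.
have [ppe ppA'] := path_eA ppA.
have [y [pre [post [yC py ly ap ep]]]] := last_in_C zC ppe.
rewrite ppl in ly.
have upost : uniq post by move: ppu; rewrite ep /= cat_uniq => /andP[_ /and3P[_ _ ->]].
have postA : {subset post <= A} by move=> x xp; apply: ppA'; rewrite ep mem_cat xp orbT.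
clearbody C; case/splitPr: yC sC uC CA cyC szC ap => C1 C2 sC uC CA cyC szC ap.
have {}cyC : path e y (rcons (C2 ++ C1) y).
  by move: cyC; rewrite cycle_catC.
have pD : perm_eq (rcons (C2 ++ C1) y) (C1 ++ y :: C2).
  by rewrite perm_rcons -cat_cons perm_catC.
have szD : b.+1 <= size (C2 ++ C1).
  by move: szC; rewrite !size_cat /= addnS ltnS addnC.
case eD : (C2 ++ C1) cyC pD szD => [|c D'] // cyC pD szD.
move: cyC; rewrite /= => /andP[_ pcD].
set L := c :: rcons D' y ++ post.
have sL : sorted e L by rewrite /L /= cat_path pcD last_rcons py.
have lL : last w L = w by rewrite /L /= last_cat last_rcons ly.
have uL : uniq L.
  have -> : uniq L = uniq ((C1 ++ y :: C2) ++ post).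
    by apply: perm_uniq; rewrite /L -cat_cons perm_cat2r.
  rewrite cat_uniq uC upost andbT /=; apply/hasPn => x xp; exact: (allP ap x xp).
have LA : {subset L <= A}.
  move=> x; rewrite /L -cat_cons mem_cat => /orP[xD | /postA //].
  by apply: CA; rewrite -(perm_mem pD).
have szL : b.+2 <= size L.
  rewrite /L /= size_cat size_rcons addSn ltnS; apply: leq_trans (leq_addr _ _).
  exact: szD.
set n := size L - b.+2.
have nlt : n < size L by rewrite /n ltn_subrL /=; apply: leq_trans szL.
have sL2 : sorted e (drop n L) by apply: sorted_drop.
have uL2 : uniq (drop n L) by apply: drop_uniq.
have lL2 : last w (drop n L) = w by rewrite last_drop.
have szL2 : size (drop n L) = b.+2 by rewrite size_drop /n subKn.
have L2A : {subset drop n L <= A} by move=> x /mem_drop /LA.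
case eL2 : (drop n L) sL2 uL2 lL2 szL2 L2A => [|x p2] // sL2 uL2 lL2 szL2 L2A.
rewrite /= in lL2 szL2.
exists (rev (belast x p2)); split.
- by rewrite size_rev size_belast; case: szL2.
- have := rev_path econv x p2; rewrite lL2 => ->; exact: sL2.
- move: uL2; rewrite lastI rcons_uniq lL2 /= => /andP[h1 h2].
  by rewrite mem_rev h1 rev_uniq.
- move=> v; rewrite mem_rev => /mem_belast vx; exact: L2A.
Qed.

Lemma okp_cat a s1 s2 t1 t2 : size t1 = size s1 ->
  okp a (s1 ++ s2) (t1 ++ t2) = okp a s1 t1 && okp (last a (flatten t1)) s2 t2.
Proof.
elim: s1 a t1 => [|d s1 IH] a [|l t1] //= [sz].
by rewrite IH // last_cat andbA.
Qed.

Lemma okp_back a cs : okp a (nseq (size cs) false) [seq [:: c] | c <- cs] = path econv a cs.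
Proof. by elim: cs a => [|c cs IH] a //=; rewrite IH andbT. Qed.

Lemma outdegD1 (A B : {set V}) y : irreflexive e -> y \in B ->
  outdeg A y <= outdeg (A :\: B) y + #|B :\ y|.
Proof.
move=> irr yB; rewrite /outdeg; apply: leq_trans (leq_card_setU _ _).
apply: subset_leq_card; apply/subsetP => z; rewrite !inE => /andP[zA ezy].
case zB: (z \in B); rewrite /= ?zA ?ezy ?orbT //= andbT.
by apply/eqP => zy; move: ezy; rewrite zy irr.
Qed.

Lemma outdeg_closed (A : {set V}) w y :
  y \in [set x in A | connect (eA A) w x && ~~ connect (eA A) x w] ->
  outdeg [set x in A | connect (eA A) w x && ~~ connect (eA A) x w] y = outdeg A y.
Proof.
rewrite inE => /and3P[yA wy yw]; rewrite /outdeg; apply: eq_card => z.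
rewrite !inE; case zA: (z \in A); rewrite ?andbF //=.
case ez: (e y z); rewrite ?andbF // !andbT.
have yz : connect (eA A) y z by apply: connect1; rewrite /eA yA zA ez.
rewrite (connect_trans wy yz) /=; apply/negP => zw; move/negP: yw; apply.
exact: connect_trans yz zw.
Qed.

Lemma nohas_nseq (l : seq bool) : ~~ has id l -> l = nseq (size l) false.
Proof. by elim: l => [|[] l IH] //= /IH <-. Qed.

Lemma decomp_back (s' : seq bool) : exists b r,
  [/\ false :: s' = nseq b false ++ r, 0 < b & (r = [::] \/ exists r2, r = true :: r2)].
Proof.
case h: (has id s').
  case: (split_find h) => x s1 s2 hx ns1.
  exists (size s1).+1, (true :: s2); split=> //; last by right; exists s2.
  by rewrite /= -cats1 -catA -(nohas_nseq ns1) hx.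
exists (size s').+1, [::]; split=> //; last by left.
by rewrite cats0 /= -(nohas_nseq (negbT h)).
Qed.

Lemma ar3 a c x : a + c.+1 <= x + a.+1 -> c <= x.
Proof. lia. Qed.
Lemma ar4 a c x : a + c.+1 <= x + a -> 0 < x.
Proof. lia. Qed.

Lemma star (irr : irreflexive e) n : forall (A : {set V}) (w : V) (s : seq bool),
  #|A| <= n -> w \in A ->
  (forall y, y \in A -> y != w -> size s <= outdeg A y) ->
  (s != [::] -> 0 < outdeg A w) ->
  exists l t, [/\ path e w l, okp (last w l) s t, uniq (w :: l ++ flatten t)
                & {subset w :: l ++ flatten t <= A}].
Proof.
elim: n => [|n IH] A w s hA wA deg degw.
  by move: hA; rewrite leqn0 => /eqP/cards0_eq A0; move: wA; rewrite A0 inE.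
case: s deg degw => [|d s'] deg degw.
  by exists [::], [::]; split=> // x; rewrite inE => /eqP ->.
set s := d :: s' in deg degw *.
have degw' : 0 < outdeg A w by apply: degw.
set O := [set x in A | connect (eA A) w x && ~~ connect (eA A) x w].
have wO : w \notin O by rewrite inE connect0 andbF.
have [O0 | [y0 y0O]] := set_0Vmem O.
  have conn : forall y, y \in A -> connect (eA A) w y -> connect (eA A) y w.
    move=> y yA wy; apply/negPn/negP => ny.
    have : y \in O by rewrite inE yA wy ny.
    by rewrite O0 inE.
  move: deg degw'; rewrite /s; clear degw s; case: d => deg degw'.
  +
    have [w' w'A ew'] : exists2 w', w' \in A & e w w'.
      by move: degw'; rewrite /outdeg card_gt0 => /set0Pn [x]; rewrite inE => /andP[]; exists x.
    have w'w : w' != w by apply/eqP => w'w; move: ew'; rewrite w'w irr.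
    have hAw : #|A :\ w| <= n.
      by move: hA; rewrite (cardsD1 w A) wA add1n ltnS.
    have w'A' : w' \in A :\ w by rewrite !inE w'w.
    have deg' : forall y, y \in A :\ w -> y != w' -> size s' <= outdeg (A :\ w) y.
      move=> y; rewrite !inE => /andP[yw yA] _.
      have := leq_trans (deg y yA yw) (outdegD A [set w] y).
      by rewrite cards1 addn1 ltnS.
    have degw'' : s' != [::] -> 0 < outdeg (A :\ w) w'.
      move=> s'0; have := leq_trans (deg w' w'A w'w) (outdegD A [set w] w').
      rewrite cards1 addn1 ltnS; apply: leq_trans.
      by case: s' s'0 {deg deg'}.
    have [l' [t' [pl' ok' u' sub']]] := IH (A :\ w) w' s' hAw w'A' deg' degw''.
    exists [::], ((w' :: l') :: t'); split=> //.
    * by rewrite /= ew' pl' ok'.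
    * rewrite /= in u' *; rewrite u' andbT.
      apply/negP => /sub'; by rewrite !inE eqxx.
    * move=> x; rewrite inE => /orP[/eqP -> // | xin].
      by have := sub' x xin; rewrite !inE => /andP[].
  +
    have [b [r [sdec b0 hr]]] := decomp_back s'.
    rewrite sdec in deg.
    have degb : forall y, y \in A -> y != w -> b <= outdeg A y.
      move=> y yA yw; apply: leq_trans (deg y yA yw); rewrite size_cat size_nseq.
      exact: leq_addr.
    have [cs [szcs pcs ucs csA]] := inpath irr wA degb degw' conn.
    rewrite sdec; clear sdec.
    case: hr deg => [-> | [r2 ->]] deg.
      exists [::], [seq [:: c] | c <- cs]; split=> //.
      * by rewrite cats0 -szcs okp_back.
      * by rewrite /= flatten_seq1.
      * by move=> x; rewrite /= flatten_seq1 inE => /orP[/eqP -> // | /csA].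
    set u := last w cs.
    set B := [set x in w :: cs].
    have cs0 : cs != [::] by rewrite -size_eq0 szcs -lt0n.
    have ucs_in : u \in cs by apply: last_in.
    have uB : u \in B by rewrite inE inE ucs_in orbT.
    have uA : u \in A by apply: csA.
    have uw : u != w by apply/eqP => uw; move: ucs; rewrite /= -uw ucs_in.
    have cB : #|B| = b.+1 by rewrite cardsE (card_uniqP ucs) /= szcs.
    have cB1 : #|B :\ u| = b by move: (cardsD1 u B); rewrite cB uB add1n => [[]].
    have wB : w \in B by rewrite inE mem_head.
    have hA' : #|A :\: B| <= n.
      have h : #|A :\: B| < #|A|.
        apply: proper_card; apply/properP; split; first exact: subsetDl.
        by exists w => //; rewrite inE wB.
      by rewrite -ltnS (leq_trans h hA).
    have [u' u'A' eu'] : exists2 u', u' \in A :\: B & e u u'.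
      have := leq_trans (deg u uA uw) (outdegD1 A irr uB).
      rewrite cB1 size_cat size_nseq => /ar4.
      by rewrite /outdeg card_gt0 => /set0Pn [x]; rewrite inE => /andP[]; exists x.
    have notB : forall y, y \in A :\: B -> y \in A /\ y != w.
      move=> y; rewrite inE => /andP[yB yA]; split=> //.
      by apply/eqP => yw; move: yB; rewrite yw wB.
    have deg' : forall y, y \in A :\: B -> y != u' -> size r2 <= outdeg (A :\: B) y.
      move=> y /notB [yA yw] _.
      have := leq_trans (deg y yA yw) (outdegD A B y).
      by rewrite cB size_cat size_nseq; apply: ar3.
    have degu' : r2 != [::] -> 0 < outdeg (A :\: B) u'.
      move=> r20; case/notB: u'A' => u'A u'w.
      have := leq_trans (deg u' u'A u'w) (outdegD A B u').
      rewrite cB size_cat size_nseq => /ar3; apply: leq_trans.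
      by case: r2 r20 {deg deg'}.
    have [l' [t' [pl' ok' u'' sub']]] := IH (A :\: B) u' r2 hA' u'A' deg' degu'.
    exists [::], ([seq [:: c] | c <- cs] ++ (u' :: l') :: t'); split=> //.
    * rewrite okp_cat; last by rewrite size_map szcs size_nseq.
      by rewrite -szcs okp_back pcs flatten_seq1 /= -/u eu' pl' ok'.
    * rewrite cat0s flatten_cat flatten_seq1.
      have -> : flatten ((u' :: l') :: t') = u' :: l' ++ flatten t' by [].
      rewrite -cat_cons cat_uniq ucs u'' andbT.
      apply/hasPn => x /sub'; rewrite inE => /andP[xB _].
      by move: xB; rewrite /B inE.
    * move=> x; rewrite cat0s flatten_cat flatten_seq1.
      have -> : flatten ((u' :: l') :: t') = u' :: l' ++ flatten t' by [].
      rewrite -cat_cons mem_cat.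
      case/orP=> [|/sub']; first by rewrite inE => /orP[/eqP -> // | /csA].
      by rewrite inE => /andP[].
have OA : O \subset A by apply/subsetP => x; rewrite inE => /andP[].
have hO : #|O| <= n.
  have h : #|O| < #|A| by apply: proper_card; apply/properP; split=> //; exists w.
  by rewrite -ltnS (leq_trans h hA).
have /connectP [p0 pp0 ly0] : connect (eA A) w y0 by move: y0O; rewrite inE => /and3P[].
case: (shortenP pp0) ly0 => p1 pp1 up1 _ ly0.
have p10 : p1 != [::].
  by apply/eqP => p10; move: y0O; rewrite ly0 p10 /= (negPf wO).
have hasO : has (mem O) p1 by apply/hasP; exists y0 => //; rewrite ly0 last_in.
case: (split_find hasO) pp1 up1 => s0 pre post s0O npre pp1 up1.
have {}s0O : s0 \in O by [].
have pp2 : path (eA A) w (rcons pre s0) by move: pp1; rewrite cat_path => /andP[].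
have [pe2 _] := path_eA pp2.
have s0A : s0 \in A by apply: (subsetP OA).
have s0w : s0 != w by apply/eqP => s0w; move: s0O; rewrite s0w (negPf wO).
have degO : forall y, y \in O -> y != s0 -> size s <= outdeg O y.
  move=> y yO _; rewrite outdeg_closed //; apply: deg; first exact: (subsetP OA).
  by apply/eqP => yw; rewrite yw in yO; rewrite yO in wO.
have degO0 : s != [::] -> 0 < outdeg O s0.
  by move=> _; rewrite outdeg_closed //; apply: leq_trans (deg s0 s0A s0w).
have [l' [t' [pl' ok' u' sub']]] := IH O s0 s hO s0O degO degO0.
have uwp : uniq (w :: pre).
  have : uniq (w :: rcons pre s0) by move: up1; rewrite -cat_cons cat_uniq => /andP[].
  by rewrite -rcons_cons rcons_uniq => /andP[].
exists (rcons pre s0 ++ l'), t'; split.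
- by rewrite cat_path pe2 last_rcons pl'.
- by rewrite last_cat last_rcons.
- rewrite -cats1 -!catA cat1s -cat_cons cat_uniq uwp u' andbT.
  apply/hasPn => x xin; apply/negP => xwp.
  have xO : x \in O by apply: sub'.
  move: xwp; rewrite inE => /orP[/eqP xw | xp].
    by move: xO; rewrite xw (negPf wO).
  by move/negP: npre; apply; apply/hasP; exists x.
- move=> x; rewrite -catA -cat_cons mem_cat => /orP[xp | xr].
    by apply: (eA_mem wA pp2).
  by apply: (subsetP OA); apply: sub'; rewrite inE xr orbT.
Qed.

End Embed.
Theorem corollary20 (s : seq bool) :
  is_mad_dplus (@opath_arc s) (size s).
Proof.
split.
- move=> V e V0 irr deg.
  have [w _] : exists w : V, true by case/card_gt0P: V0 => w _; exists w.
  have deg' : forall y, y \in [set: V] -> y != w -> size s <= outdeg e [set: V] y.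
    move=> y _ _; apply: leq_trans (deg y) _; rewrite /outdeg.
    by apply: subset_leq_card; apply/subsetP => z; rewrite !inE.
  have degw : s != [::] -> 0 < outdeg e [set: V] w.
    move=> s0; have h0 : 0 < size s by rewrite lt0n size_eq0.
    apply: leq_trans h0 (leq_trans (deg w) _); rewrite /outdeg.
    by apply: subset_leq_card; apply/subsetP => z; rewrite !inE.
  have [l [t [pl ok u sub]]] :=
    @star V e irr #|[set: V]| [set: V] w s (leqnn _) (in_setT w) deg' degw.
  apply: (okp_sub ok).
  move: u; rewrite -cat_cons cat_uniq => /and3P[_ hn uf].
  rewrite /= uf andbT; apply/negP => lf; move/hasP: hn; apply.
  by exists (last w l) => //; apply: mem_last.
- move=> c' hc'; rewrite leqNgt; apply/negP => lt.
  have := hc' 'I_c'.+1 (fun x y => x != y).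
  rewrite card_ord => /(_ isT).
  have irr : irreflexive (fun x y : 'I_c'.+1 => x != y) by move=> x; rewrite eqxx.
  move=> /(_ irr) [].
    move=> v; have -> : [set w | v != w] = [set~ v].
      by apply/setP => z; rewrite !inE eq_sym.
    by rewrite cardsC1 card_ord.
  move=> f [p [finj _]].
  have := leq_card f finj; rewrite !card_ord ltnS => h.
  by move: (leq_trans lt h); rewrite ltnn.
Qed.
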